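(* Let $R$ be a commutative semiring with identity that is additively cancellative, yoked and zerosumfree. Then for every $a\in R$, the principal ideal $\langle a\rangle = aR=\{ar\mid r\in R\}$ is a $k$-ideal of $R$.
   Context: A semiring is a set $R$ with addition and multiplication such that $(R,+)$ is a commutative monoid with identity $0$, $(R,\cdot)$ is a monoid with identity $1$, multiplication distributes over addition on both sides, $0\cdot r=0=r\cdot 0$ for all $r$, and $1\neq 0$. An ideal $I$ is a $k$-ideal if $x+y\in I$ and $x\in I$ imply $y\in I$. $R$ is additively cancellative if $a+c=b+c$ implies $a=b$; yoked if for all $a,b\in R$ there exists $r\in R$ with $a+r=b$ or $b+r=a$; zerosumfree if $a+b=0$ implies $a=b=0$. *)

(* Defs.v *)
From mathcomp Require Import all_boot all_algebra.
Set Implicit Arguments. Unset Strict Implicit. Unset Printing Implicit Defensive.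
Import GRing.Theory.
Local Open Scope ring_scope.

Definition add_cancellative (R : comNzSemiRingType) : Prop :=
  forall a b c : R, a + c = b + c -> a = b.

Definition yoked (R : comNzSemiRingType) : Prop :=
  forall a b : R, exists r : R, a + r = b \/ b + r = a.

Definition zerosumfree (R : comNzSemiRingType) : Prop :=
  forall a b : R, a + b = 0 -> a = 0 /\ b = 0.

Definition is_ideal (R : comNzSemiRingType) (I : R -> Prop) : Prop :=
  [/\ I 0, (forall x y, I x -> I y -> I (x + y)) & (forall r x, I x -> I (r * x))].

Definition is_k_ideal (R : comNzSemiRingType) (I : R -> Prop) : Prop :=
  is_ideal I /\ forall x y : R, I (x + y) -> I x -> I y.

Definition principal_ideal (R : comNzSemiRingType) (a : R) : R -> Prop :=
  fun x => exists r : R, x = a * r.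

(* Main.v *)
Require Import Defs.
From mathcomp Require Import all_boot all_algebra.

Theorem lemma2p10 (R : comNzSemiRingType)
  (hc : add_cancellative R) (hy : yoked R) (hz : zerosumfree R) :
  forall a : R, is_k_ideal (principal_ideal a).
Proof.
move=> a; split.
  split.
  - by exists 0%R; rewrite GRing.mulr0.
  - move=> x y [r ->] [s ->]; exists (r + s)%R; by rewrite GRing.mulrDr.
  - move=> r x [s ->]; exists (r * s)%R.
    by rewrite GRing.mulrA [(r * a)%R]GRing.mulrC GRing.mulrA.
move=> x y [r Hr] [s Hs]; subst x.
have [t [Ht|Ht]] := hy s r.
- exists t; apply: (hc _ _ (a * s)%R).
  by rewrite GRing.addrC Hr -Ht GRing.mulrDr GRing.addrC.
- exists 0%R; rewrite GRing.mulr0.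
  have H : ((a * t + y) + a * r = 0 + a * r)%R.
    rewrite GRing.add0r -[in RHS]Hr -Ht GRing.mulrDr.
    by rewrite [(a * r + _)%R]GRing.addrC -GRing.addrA [(y + _)%R]GRing.addrC GRing.addrA.
  by case: (hz _ _ (hc _ _ _ H)).
Qed.
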